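(* Let $G$ be a persistent graph with vertex order $<$, let $k\ge 4$, and let $p_1,\dots,p_k\in V(G)$ form an induced cycle in this order (edges $\{p_i,p_{i+1}\}$ for $1\le i<k$ and $\{p_k,p_1\}$). If $p_2$ is the leftmost of $p_1,\dots,p_k$, then each of $p_4,\dots,p_k$ lies to the left of both $p_1$ and $p_3$.
   Context: A persistent graph is a graph $G$ together with a linear order $v_1<v_2<\dots<v_n$ on $V(G)$ such that (1) $\{v_i,v_{i+1}\}\in E(G)$ for all $i$; (2) X-property: for all $p<q<r<s$, if $\{p,r\}\in E(G)$ and $\{q,s\}\in E(G)$ then $\{p,s\}\in E(G)$; (3) bar-property: if $\{p,q\}\in E(G)$ and $p,q$ are not consecutive in the order, then there is a vertex $r$ with $p<r<q$ adjacent to both $p$ and $q$. ''Left of'' refers to the order $<$. *)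

(* Defs.v *)
(* Vertices of an n-vertex persistent graph are 'I_n, and the
   linear order v_1 < ... < v_n is the natural order on ordinals. *)
From mathcomp Require Import all_boot.
Set Implicit Arguments.
Unset Strict Implicit.
Unset Printing Implicit Defensive.

Definition simple_graph (n : nat) (E : rel 'I_n) : Prop :=
  (forall u v, E u v = E v u) /\ (forall u, ~~ E u u).

Definition persistent (n : nat) (E : rel 'I_n) : Prop :=
  [/\ simple_graph E,
      (forall u v : 'I_n, nat_of_ord v = u.+1 -> E u v),
      (* (2) X-property *)
      (forall p q r s : 'I_n, p < q -> q < r -> r < s ->
         E p r -> E q s -> E p s)
    & (* (3) bar-property *)
      (forall p q : 'I_n, p < q -> E p q -> nat_of_ord q != p.+1 ->
         exists r : 'I_n, [/\ p < r, r < q, E p r & E r q])].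

(* p 0, ..., p (k-1) (i.e. p_1, ..., p_k) are distinct and form an induced
   cycle in this order: p i ~ p j iff i, j are cyclically consecutive. *)
Definition induced_cycle (n : nat) (E : rel 'I_n) (k : nat) (p : nat -> 'I_n)
  : Prop :=
  (forall i j, i < k -> j < k -> p i = p j -> i = j) /\
  (forall i j, i < k -> j < k ->
     E (p i) (p j) = (i.+1 %% k == j) || (j.+1 %% k == i)).

(* Main.v *)
Require Import Defs.
From mathcomp Require Import all_boot.
From mathcomp Require Import zify.

Lemma lemB n (E : rel 'I_n) : persistent E -> forall u v w : 'I_n,
  u < v -> v < w -> E u v -> E u w ->
  (forall z : 'I_n, v < z -> z < w -> ~ E u z) -> E v w.
Proof.
move=> [[Esym Eirr] Hcons HX Hbar] u v w uv vw Euv Euw Hno.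
suff H : forall d (r : 'I_n), v - r <= d -> u <= r -> r <= v -> E r w -> E v w.
  by apply: (H (v - u) u) => //; apply: ltnW.
elim=> [|d IH] r Hd ur rv Erw.
  have -> : v = r by apply: val_inj => /=; lia.
  done.
have [req|rne] := boolP (nat_of_ord r == nat_of_ord v).
  have -> : v = r by apply: val_inj => /=; lia.
  done.
have rltv : r < v by lia.
have [s [rs sw Ers Esw]] := Hbar r w (ltn_trans rltv vw) Erw ltac:(apply/eqP; lia).
have [sv|vs] := leqP s v.
  by apply: (IH s) => //; lia.
exfalso.
have [ur'|ur'] := boolP (nat_of_ord u == nat_of_ord r).
  apply: (Hno s vs sw).
  have -> : u = r by apply: val_inj => /=; lia.
  done.
apply: (Hno s vs sw).
apply: (HX u r v s) => //; lia.
Qed.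

Lemma mainL n (E : rel 'I_n) (a : 'I_n) (q : nat -> 'I_n) (m : nat) :
 persistent E -> 2 <= m ->
 (forall i, i <= m -> a < q i) ->
 E a (q 0) -> E a (q m) ->
 (forall i, 0 < i < m -> ~ E a (q i)) ->
 ~ E (q 0) (q m) ->
 (forall i, 0 < i < m -> q i <> q 0 /\ q i <> q m) ->
 (forall j, j < m -> E (q j) (q j.+1)) ->
 q 0 < q m ->
 forall i, 0 < i < m -> q i < q 0.
Proof.
move=> HP m2 H1 Eab Eac H3 H4 H5 H6 H7.
have HP' := HP.
case: HP' => [[Esym Eirr] Hcons HX Hbar].
have S2 : forall z : 'I_n, E a z -> q 0 < z -> forall j, j < m -> q j < z.
  move=> z Eaz bz; elim=> [|j IH] hj; first done.
  have qjz := IH (ltnW hj).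
  case: (ltngtP (q j.+1) z) => [//|zq|eq].
    exfalso; apply: (H3 j.+1); first lia.
    apply: (HX a (q j) z (q j.+1)) => //; first by apply: H1; lia.
    by apply: H6; lia.
  exfalso; apply: (H3 j.+1); first lia.
  have -> : q j.+1 = z by apply: val_inj.
  done.
have Eqc : E (q (m - 1)) (q m).
  have := H6 (m - 1) ltac:(lia).
  by have -> : (m - 1).+1 = m by lia.
have S3 : q (m - 1) < q 0.
  case: (ltngtP (q (m - 1)) (q 0)) => [//|bq|eq]; last first.
    exfalso; apply: (proj1 (H5 (m - 1) ltac:(lia))); exact: val_inj.
  exfalso.
  suff H : forall d (y : 'I_n), y <= d -> E a y -> q 0 < y -> y <= q m -> False.
    exact: (H (q m) (q m)).
  elim=> [|d IH] y yd Eay by' yc; first lia.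
  have Eby : E (q 0) y.
    apply: (@lemB _ _ HP _ _ _ (H1 0 ltac:(lia)) by' Eab Eay).
    move=> z bz zy Eaz; apply: (IH z) => //; lia.
  case: (ltngtP y (q m)) => [ylt|ygt|yeq]; [|lia|]; last first.
    apply: H4; have <- : y = q m by apply: val_inj.
    done.
  apply: H4.
  apply: (HX (q 0) (q (m - 1)) y (q m)) => //.
  by apply: S2 => //; lia.
have S4 : forall d, d < m - 1 -> q (m - 1 - d) < q 0.
  elim=> [|d IH] hd; first by rewrite subn0.
  have hq := IH (ltnW hd).
  case: (ltngtP (q (m - 1 - d.+1)) (q 0)) => [//|bq|eq]; last first.
    exfalso; apply: (proj1 (H5 (m - 1 - d.+1) ltac:(lia))); exact: val_inj.
  exfalso; apply: (H3 (m - 1 - d.+1)); first lia.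
  have Ee : E (q (m - 1 - d)) (q (m - 1 - d.+1)).
    rewrite Esym; have := H6 (m - 1 - d.+1) ltac:(lia).
    by have -> : (m - 1 - d.+1).+1 = m - 1 - d by lia.
  apply: (HX a (q (m - 1 - d)) (q 0) (q (m - 1 - d.+1))) => //.
  by apply: H1; lia.
move=> i hi.
have := S4 (m - 1 - i) ltac:(lia).
by have -> : m - 1 - (m - 1 - i) = i by lia.
Qed.

Section Bridge.
Variables (n : nat) (E : rel 'I_n) (k : nat) (p : nat -> 'I_n).
Hypotheses (HP : persistent E) (k4 : 4 <= k) (HC : induced_cycle E k p)
  (Hmin : forall i, i < k -> p 1 <= p i).

Lemma cycE x y : x < k -> y < k ->
  E (p x) (p y) <-> (x.+1 = y \/ y.+1 = x \/ (x.+1 = k /\ y = 0) \/ (y.+1 = k /\ x = 0)).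
Proof.
move=> xk yk; case: HC => _ Hadj; rewrite Hadj //.
have hm : forall z, z < k -> z.+1 %% k = if z.+1 == k then 0 else z.+1.
  move=> z zk; case: eqP => [->|ne]; [exact: modnn | apply: modn_small; lia].
rewrite !hm //.
case: (x.+1 =P k) => h1; case: (y.+1 =P k) => h2; split => H; lia.
Qed.

Lemma bridge (g : nat -> nat) :
  (g 0 = 2 /\ g (k - 2) = 0) \/ (g 0 = 0 /\ g (k - 2) = 2) ->
  (forall j, 0 < j < k - 2 -> 3 <= g j < k) ->
  (forall j, j < k - 2 -> (g j).+1 = g j.+1 \/ (g j.+1).+1 = g j \/
       ((g j).+1 = k /\ g j.+1 = 0) \/ ((g j.+1).+1 = k /\ g j = 0)) ->
  p (g 0) < p (g (k - 2)) ->
  forall j, 0 < j < k - 2 -> p (g j) < p (g 0) /\ p (g j) < p (g (k - 2)).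
Proof.
move=> G0 Gi Gadj H7.
have Gk : forall j, j <= k - 2 -> g j < k.
  move=> j hj.
  have [->|jn0] := eqVneq j 0; first lia.
  have [->|jnm] := eqVneq j (k - 2); first lia.
  have := Gi j ltac:(lia); lia.
have Ginj : forall i j, i <= k - 2 -> j <= k - 2 -> p (g i) = p (g j) -> g i = g j.
  move=> i j hi hj; case: HC => Hinj _; apply: Hinj; exact: Gk.
have H1 : forall i, i <= k - 2 -> p 1 < p (g i).
  move=> i hi; have := Hmin (g i) (Gk i hi); rewrite leq_eqVlt => /orP[/eqP h|//].
  exfalso; case: HC => Hinj _.
  have := Hinj 1 (g i) ltac:(lia) (Gk i hi) (val_inj h).
  have [->|in0] := eqVneq i 0; first lia.
  have [->|inm] := eqVneq i (k - 2); first lia.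
  have := Gi i ltac:(lia); lia.
have HM := @mainL n E (p 1) (fun j => p (g j)) (k - 2) HP ltac:(lia) H1.
have Hc : forall j, 0 < j < k - 2 -> p (g j) < p (g 0).
  apply: HM => //.
  - apply/(cycE); [lia|apply: Gk; lia|lia].
  - apply/(cycE); [lia|apply: Gk; lia|lia].
  - move=> i hi /cycE; have := Gi i hi; have := Gk i ltac:(lia); lia.
  - move/cycE; have := Gk 0 ltac:(lia); have := Gk (k - 2) ltac:(lia); lia.
  - move=> i hi; have := Gi i hi; split => /Ginj; lia.
  - move=> j hj; apply/cycE; [apply: Gk; lia | apply: Gk; lia |].
    exact: Gadj.
move=> j hj; have := Hc j hj; lia.
Qed.
End Bridge.

Theorem lemma3 (n : nat) (E : rel 'I_n) (k : nat) (p : nat -> 'I_n) :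
  persistent E -> 4 <= k -> induced_cycle E k p ->
  (forall i, i < k -> p 1 <= p i) ->
  forall i, 3 <= i < k -> (p i < p 0) && (p i < p 2).
Proof.
move=> HP k4 HC Hmin i /andP[i3 ik].
pose f j := if j.+2 == k then 0 else j.+2.
case: (ltngtP (p 2) (p 0)) => [h20|h02|heq].
- have B := @bridge n E k p HP k4 HC Hmin f.
  have [] := B _ _ _ _ (i - 2) ltac:(lia).
  + rewrite /f; left; repeat case: eqP => ?; lia.
  + move=> j hj; rewrite /f; repeat case: eqP => ?; lia.
  + move=> j hj; rewrite /f; repeat case: eqP => ?; lia.
  + rewrite /f; do 2 case: eqP => ?; try lia; done.
  + rewrite /f; do 3 case: eqP => ?; try lia.
    have -> : (i - 2).+2 = i by lia.
    move=> *; apply/andP; split; lia.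
- have B := @bridge n E k p HP k4 HC Hmin (fun j => f (k - 2 - j)).
  have [] := B _ _ _ _ (k - i) ltac:(lia).
  + rewrite /f; right; repeat case: eqP => ?; lia.
  + move=> j hj; rewrite /f; repeat case: eqP => ?; lia.
  + move=> j hj; rewrite /f; repeat case: eqP => ?; lia.
  + rewrite /f; do 2 case: eqP => ?; try lia; rewrite ?subn0 ?subnn; try done.
    all: try (have -> : k - 2 - (k - 2) = 0 by lia); try (have -> : (k - 2 - 0).+2 = k by lia); try done.
  + rewrite /f; do 3 case: eqP => ?; try lia.
    have -> : (k - 2 - (k - i)).+2 = i by lia.
    move=> *; apply/andP; split; lia.
- exfalso; case: HC => Hinj _.
  have := Hinj 2 0 ltac:(lia) ltac:(lia) (val_inj heq); lia.
Qed.
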